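(* Let $f(t)\in\mathbb{F}_2[t]$ be irreducible, $f(t)\neq t$, not self-reciprocal, and $R_f=\mathbb{F}_2[t,t^{-1},f(t)^{-1}]$. Let $\varphi$ be an automorphism of $(R_f,+)$ and $\Phi$ an automorphism of $U(R_f)$. (a) If $\Phi(u)\varphi(1)=\varphi(u)$ for all $u\in U(R_f)$, then $\Phi(u)=u$ for all $u\in U(R_f)$. (b) If $\Phi(u)\varphi(1)=\varphi(u^{-1})$ for all $u\in U(R_f)$, then $\Phi(u)=u^{-1}$ for all $u\in U(R_f)$.
   Context: A polynomial $f(t)$ of degree $m$ is self-reciprocal if $t^m f(1/t)=f(t)$. *)

(* Defs.v *)
From HB Require Import structures.
From mathcomp Require Import all_boot all_order all_algebra.
From mathcomp Require Import fraction.
Set Implicit Arguments. Unset Strict Implicit. Unset Printing Implicit Defensive.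
Import GRing.Theory.
Local Open Scope ring_scope.

Notation F2poly := {poly 'F_2}.
Notation F2frac := {fraction F2poly}.

Notation tofrac := (@FracField.tofrac F2poly).

(* Reciprocal polynomial t^m f(1/t), m = deg f (coefficient reversal). *)
Definition recip (f : F2poly) : F2poly :=
  \poly_(i < size f) f`_((size f).-1 - i).

Definition self_reciprocal (f : F2poly) : Prop := recip f = f.

(* R_f = F_2[t, t^-1, f^-1], as a subring of F_2(t):
   the elements p / (t^a f^b). *)
Definition in_Rf (f : F2poly) (x : F2frac) : Prop :=
  exists (p : F2poly) (a b : nat),
    x = tofrac p / tofrac ('X^a * f ^+ b).

Definition in_URf (f : F2poly) (x : F2frac) : Prop :=
  in_Rf f x /\ x != 0 /\ in_Rf f x^-1.

Definition add_aut_Rf (f : F2poly) (phi : F2frac -> F2frac) : Prop :=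
  (forall x, in_Rf f x -> in_Rf f (phi x)) /\
  (forall x y, in_Rf f x -> in_Rf f y -> phi (x + y) = phi x + phi y) /\
  (forall x y, in_Rf f x -> in_Rf f y -> phi x = phi y -> x = y) /\
  (forall y, in_Rf f y -> exists2 x, in_Rf f x & phi x = y).

Definition mul_aut_URf (f : F2poly) (Phi : F2frac -> F2frac) : Prop :=
  (forall x, in_URf f x -> in_URf f (Phi x)) /\
  (forall x y, in_URf f x -> in_URf f y -> Phi (x * y) = Phi x * Phi y) /\
  (forall x y, in_URf f x -> in_URf f y -> Phi x = Phi y -> x = y) /\
  (forall y, in_URf f y -> exists2 x, in_URf f x & Phi x = y).

(* Main.v *)
Require Import Defs.
From HB Require Import structures.
From mathcomp Require Import all_boot all_order all_algebra.
From mathcomp Require Import fraction.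
From mathcomp Require Import ring zify.
Import GRing.Theory.
Local Open Scope ring_scope.
Set Implicit Arguments. Unset Strict Implicit.


Lemma F2_neq0 (x : 'F_2) : x != 0 -> x = 1.
Proof. by case: x => [[|[|n]] Hn] //= _; apply/val_inj. Qed.

Lemma monicF2 (p : {poly 'F_2}) : p != 0 -> p \is monic.
Proof. by move=> p0; apply/monicP; apply: F2_neq0; rewrite lead_coef_eq0. Qed.

Lemma irr_prime (f p q : {poly 'F_2}) : irreducible_poly f -> f %| p * q -> (f %| p) || (f %| q).
Proof.
move=> irr fpq; have [fp|nfp] := boolP (f %| p) => //=.
have cop : coprimep f p.
  case: (irredp_XsubCP irr (dvdp_gcdl f p)) => H.
    by rewrite /coprimep size_poly_eq1.
  by move: nfp; rewrite (dvdp_trans _ (dvdp_gcdr f p)) // -(eqp_dvdl _ H).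
by rewrite -(Gauss_dvdpr q cop).
Qed.

Lemma FL (f : {poly 'F_2}) : irreducible_poly f -> forall n k (p q : {poly 'F_2}),
  p * q = 'X^n * f ^+ k -> exists i j, p = 'X^i * f ^+ j.
Proof.
move=> irr; have f0 := irredp_neq0 irr.
elim=> [|n IHn].
  elim=> [|k IHk] p q.
    rewrite expr0 mulr1 => pq1; exists 0%N, 0%N; rewrite expr0 mul1r.
    have p0 : p != 0 by apply: contra_eq_neq pq1 => ->; rewrite mul0r eq_sym oner_neq0.
    apply/eqP; rewrite -eqp_monic ?monicF2 ?oner_neq0 //.
    by rewrite -size_poly_eq1 -dvdp1 -pq1 dvdp_mulr.
  rewrite expr0 mul1r exprS => H.
  have /(@irr_prime f p q irr) : f %| p * q by rewrite H dvdp_mulr.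
  case/orP=> /dvdpP [r Hr].
    have [i [j Hij]] : exists i j, r = 'X^i * f ^+ j.
      apply: (IHk r q); apply: (mulfI f0).
      transitivity (p * q); last by rewrite H; ring.
      by rewrite Hr; ring.
    by exists i, j.+1; rewrite Hr Hij exprS; ring.
  apply: (IHk p r); apply: (mulfI f0).
  transitivity (p * q); last by rewrite H; ring.
  by rewrite Hr; ring.
move=> k p q H.
have X0 : ('X : {poly 'F_2}) != 0 by rewrite polyX_eq0.
have : root (p * q) 0 by rewrite H rootM /root hornerXn expr0n.
rewrite rootM => /orP [] /factor_theorem [r Hr]; rewrite subr0 in Hr.
  have [i [j Hij]] : exists i j, r = 'X^i * f ^+ j.
    apply: (IHn k r q); apply: (mulIf X0).
    transitivity (p * q); first by rewrite Hr; ring.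
    by rewrite H exprS; ring.
  by exists i.+1, j; rewrite Hr Hij exprS; ring.
apply: (IHn k p r); apply: (mulIf X0).
transitivity (p * q); first by rewrite Hr; ring.
by rewrite H exprS; ring.
Qed.

Lemma f_facts (f : {poly 'F_2}) : irreducible_poly f -> f != 'X -> ~ self_reciprocal f ->
  [/\ f`_0 = 1, lead_coef f = 1, (2 < size f)%N & f.[1] != 0].
Proof.
move=> irr fX nsr; have f0 := irredp_neq0 irr.
have lc : lead_coef f = 1 by apply: F2_neq0; rewrite lead_coef_eq0.
have c0 : f`_0 = 1.
  apply: F2_neq0; apply/negP => /eqP r0.
  have : root f 0 by rewrite /root horner_coef0 r0.
  rewrite root_factor_theorem subr0 => Xf.
  have := irr 'X; rewrite size_polyX => /(_ isT Xf).
  rewrite eqp_monic ?monicX ?monicF2 // => /eqP Xe.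
  by move: fX; rewrite -Xe eqxx.
have s2 : (2 < size f)%N.
  have s1 := irr.1; rewrite ltn_neqAle s1 andbT; apply/negP => /eqP s2.
  apply: nsr; apply/polyP => i; rewrite /recip coef_poly -s2 /=.
  case: i => [|[|i]] //=.
  - by rewrite c0 -lc lead_coefE -s2.
  - by rewrite c0 -lc lead_coefE -s2.
  - by rewrite nth_default // -s2.
split => //; apply/negP => r1.
have : root f 1 by [].
rewrite root_factor_theorem => Xf.
have := irr ('X - 1%:P); rewrite size_XsubC => /(_ isT Xf) /eqp_size.
by rewrite size_XsubC => e; move: s2; rewrite -e.
Qed.

Lemma PE (f : {poly 'F_2}) : f`_0 = 1 -> (1 < size f)%N -> forall i j i' j',
  'X^i * f ^+ j = 'X^i' * f ^+ j' -> i = i' /\ j = j'.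
Proof.
move=> c0 s1; have X0 : ('X : {poly 'F_2}) != 0 by rewrite polyX_eq0.
have h0 : forall j, ('X^0 * f ^+ j).[0] = 1.
  by move=> j; rewrite expr0 mul1r horner_exp horner_coef0 c0 expr1n.
elim=> [|i IH] j [|i'] j' H.
- split => //; move: H; rewrite !expr0 !mul1r => H.
  have := congr1 (fun p : {poly 'F_2} => (size p).-1) H => /=.
  rewrite !size_exp => /eqP; rewrite eqn_pmul2l ?subn_gt0 //; first by move/eqP.
  by case: (size f) s1.
- have := congr1 (fun p : {poly 'F_2} => p.[0]) H; rewrite h0 hornerM hornerXn expr0n /= mul0r.
  by move/eqP; rewrite oner_eq0.
- have := congr1 (fun p : {poly 'F_2} => p.[0]) H; rewrite h0 hornerM hornerXn expr0n /= mul0r.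
  by move/eqP; rewrite eq_sym oner_eq0.
- have [-> ->] // : i = i' /\ j = j'.
  apply: IH; apply: (mulfI X0); rewrite !mulrA -!exprS; exact: H.
Qed.



Notation K := {fraction {poly 'F_2}}.
Definition tau : K := tofrac 'X.
Definition E (f : {poly 'F_2}) (x y : int) : K := tau ^ x * (tofrac f) ^ y.

Lemma intsplit (x : int) : exists p n : nat, x = p%:Z - n%:Z /\ (p = 0 \/ n = 0)%N.
Proof.
case: x => n; first by exists n, 0%N; split; [rewrite subr0 | right].
by exists 0%N, n.+1; split; [rewrite NegzE sub0r | left].
Qed.

Lemma tau_neq0 : tau != 0.
Proof. by rewrite tofrac_eq0 polyX_eq0. Qed.

Lemma expz_split (a : K) (p n : nat) : a != 0 -> a ^ (p%:Z - n%:Z) = a ^+ p / a ^+ n.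
Proof. by move=> a0; rewrite expfzDr // exprnN. Qed.

Lemma Erep (f : {poly 'F_2}) (x y : int) (xp xn yp yn : nat) : f != 0 ->
  x = xp%:Z - xn%:Z -> y = yp%:Z - yn%:Z ->
  E f x y = tofrac ('X^xp * f ^+ yp) / tofrac ('X^xn * f ^+ yn).
Proof.
move=> f0 -> ->; have f0' : tofrac f != 0 by rewrite tofrac_eq0.
rewrite /E (@expz_split tau xp xn tau_neq0) (@expz_split (tofrac f) yp yn f0').
rewrite !tofracM !tofracXn /tau.
by rewrite invfM mulrACA.
Qed.

Lemma E_neq0 f x y : f != 0 -> E f x y != 0.
Proof.
move=> f0; rewrite /E; apply: mulf_neq0; apply: expfz_neq0; first exact: tau_neq0.
by rewrite tofrac_eq0.
Qed.

Lemma EM f x y x' y' : f != 0 -> E f x y * E f x' y' = E f (x + x') (y + y').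
Proof.
move=> f0; have f0' : tofrac f != 0 by rewrite tofrac_eq0.
rewrite /E (expfzDr _ _ tau_neq0) (expfzDr _ _ f0').
exact: mulrACA.
Qed.

Lemma EX f x y z : E f x y ^ z = E f (x * z) (y * z).
Proof. by rewrite /E expfzMl !exprz_exp. Qed.

Lemma E00 f : E f 0 0 = 1.
Proof. by rewrite /E !expr0z mulr1. Qed.


Lemma XF_neq0 (f : {poly 'F_2}) a b : f != 0 -> 'X^a * f ^+ b != 0.
Proof. by move=> f0; rewrite mulf_neq0 ?expf_neq0 ?polyX_eq0. Qed.

Lemma tXF_neq0 (f : {poly 'F_2}) a b : f != 0 -> tofrac ('X^a * f ^+ b) != 0.
Proof. by move=> f0; rewrite tofrac_eq0 XF_neq0. Qed.

Lemma XFM (f : {poly 'F_2}) a b c d : ('X^a * f ^+ b) * ('X^c * f ^+ d) = 'X^(a + c) * f ^+ (b + d).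
Proof. by rewrite !exprD; ring. Qed.

Lemma frac_eq (f : {poly 'F_2}) (p q : {poly 'F_2}) a b c d : f != 0 ->
  tofrac p / tofrac ('X^a * f ^+ b) = tofrac q / tofrac ('X^c * f ^+ d) ->
  p * ('X^c * f ^+ d) = q * ('X^a * f ^+ b).
Proof.
move=> f0 /eqP; rewrite (eqr_div _ _ (tXF_neq0 _ _ f0) (tXF_neq0 _ _ f0)).
by rewrite -!tofracM tofrac_eq => /eqP.
Qed.

Lemma frac_eq1 (f : {poly 'F_2}) (p q : {poly 'F_2}) c d : f != 0 ->
  tofrac p = tofrac q / tofrac ('X^c * f ^+ d) -> p * ('X^c * f ^+ d) = q.
Proof.
move=> f0 H; have := @frac_eq f p q 0 0 c d f0.
by rewrite !expr0 !mulr1 tofrac1 divr1; apply.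
Qed.

Lemma Einj (f : {poly 'F_2}) : irreducible_poly f -> f`_0 = 1 -> forall x y x' y',
  E f x y = E f x' y' -> x = x' /\ y = y'.
Proof.
move=> irr c0 x y x' y'; have f0 := irredp_neq0 irr.
have [xp [xn [hx _]]] := intsplit x; have [yp [yn [hy _]]] := intsplit y.
have [xp' [xn' [hx' _]]] := intsplit x'; have [yp' [yn' [hy' _]]] := intsplit y'.
rewrite (Erep f0 hx hy) (Erep f0 hx' hy') => /(frac_eq f0).
rewrite !XFM => /(PE c0 irr.1) [e1 e2].
split; [rewrite hx hx' | rewrite hy hy']; lia.
Qed.

Lemma polyE (f : {poly 'F_2}) (p : {poly 'F_2}) x y : irreducible_poly f -> f`_0 = 1 ->
  tofrac p = E f x y -> exists i j : nat, p = 'X^i * f ^+ j /\ x = i /\ y = j.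
Proof.
move=> irr c0; have f0 := irredp_neq0 irr.
have [xp [xn [hx _]]] := intsplit x; have [yp [yn [hy _]]] := intsplit y.
rewrite (Erep f0 hx hy) => /(frac_eq1 f0) H.
have [i [j Hp]] := FL irr H.
move: H; rewrite Hp XFM => /(PE c0 irr.1) [e1 e2].
exists i, j; split => //; split; [rewrite hx | rewrite hy]; lia.
Qed.

Lemma unitE (f : {poly 'F_2}) u : irreducible_poly f -> in_URf f u -> exists x y, u = E f x y.
Proof.
move=> irr [[p [a [b hu]]] [u0 [q [c [d hv]]]]]; have f0 := irredp_neq0 irr.
have H : p * q = 'X^(a + c) * f ^+ (b + d).
  have : u * u^-1 = 1 by apply: mulfV.
  rewrite {1}hu hv mulf_div -!tofracM -tofrac1 XFM => /esym H.
  by have := frac_eq1 f0 H; rewrite mul1r => <-.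
have [i [j Hp]] := FL irr H.
exists (i%:Z - a%:Z), (j%:Z - b%:Z).
by rewrite (Erep f0 (erefl _) (erefl _)) hu Hp.
Qed.


Lemma in_Rf_poly (f p : {poly 'F_2}) : in_Rf f (tofrac p).
Proof. by exists p, 0%N, 0%N; rewrite !expr0 mulr1 tofrac1 divr1. Qed.

Lemma Enat (f : {poly 'F_2}) (p q : nat) : E f p q = tofrac ('X^p * f ^+ q).
Proof. by rewrite /E tofracM !tofracXn. Qed.

Lemma E10 f : E f 1 0 = tau.
Proof. by rewrite /E expr1z expr0z mulr1. Qed.

Lemma E01 f : E f 0 1 = tofrac f.
Proof. by rewrite /E expr1z expr0z mul1r. Qed.

Lemma inU_E (f : {poly 'F_2}) x y : f != 0 -> in_URf f (E f x y).
Proof.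
move=> f0.
have [xp [xn [hx _]]] := intsplit x; have [yp [yn [hy _]]] := intsplit y.
split; last split.
- by rewrite (Erep f0 hx hy); exists ('X^xp * f ^+ yp), xn, yn.
- exact: E_neq0.
- rewrite (Erep f0 hx hy) invf_div; exists ('X^xn * f ^+ yn), xp, yp; reflexivity.
Qed.

Lemma phi0 f phi : add_aut_Rf f phi -> phi 0 = 0.
Proof.
move=> [_ [hadd _]].
have R0 : in_Rf f 0 by rewrite -tofrac0; apply: in_Rf_poly.
have h := hadd 0 0 R0 R0; rewrite addr0 in h.
apply: (@addrI _ (phi 0)); rewrite addr0 -h; reflexivity.
Qed.

Lemma phi_sum f phi : add_aut_Rf f phi -> forall n (g : nat -> {poly 'F_2}),
  phi (tofrac (\sum_(k < n) g k)) = \sum_(k < n) phi (tofrac (g k)).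
Proof.
move=> hphi; have [_ [hadd _]] := hphi.
elim=> [|n IH] g; first by rewrite !big_ord0 tofrac0 (phi0 hphi).
rewrite !big_ord_recr /= tofracD (hadd _ _ (in_Rf_poly _ _) (in_Rf_poly _ _)) IH; reflexivity.
Qed.

Lemma Psi1 (f : {poly 'F_2}) Psi : f != 0 -> mul_aut_URf f Psi -> Psi 1 = 1.
Proof.
move=> f0 [hU [hM _]].
have U1 : in_URf f 1 by rewrite -(E00 f); apply: inU_E.
have h := hM 1 1 U1 U1; rewrite mulr1 in h.
have [_ [n0 _]] := hU 1 U1.
apply: (mulfI n0); rewrite mulr1 -h; reflexivity.
Qed.

Lemma Psi_pow (f : {poly 'F_2}) Psi w : f != 0 -> mul_aut_URf f Psi ->
  (forall z, in_URf f (w ^ z)) -> forall z, Psi (w ^ z) = Psi w ^ z.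
Proof.
move=> f0 hPsi hw; have [hU [hM _]] := hPsi.
have hn : forall n : nat, Psi (w ^+ n) = Psi w ^+ n.
  elim=> [|n IH]; first by rewrite !expr0 (Psi1 f0 hPsi).
  rewrite !exprS hM ?IH //; [exact: (hw 1) | exact: (hw n)].
case=> n; first exact: hn.
rewrite NegzE -!exprnN.
have Un := hw n.+1; have Uv := hw (- n.+1%:Z); rewrite -exprnN in Uv.
have [_ [n0 _]] := hU _ Un.
have : Psi (w ^+ n.+1)^-1 * Psi (w ^+ n.+1) = 1.
  have [_ [n1 _]] := Un.
  rewrite -(hM _ _ Uv Un) (mulVf n1); exact: (Psi1 f0 hPsi).
rewrite hn => h.
have n2 : Psi w ^+ n.+1 != 0 by rewrite -hn.
rewrite -[LHS]mulr1 -(mulfV n2) mulrA h mul1r; reflexivity.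
Qed.


Lemma tau_pow f x : tau ^ x = E f x 0.
Proof. by rewrite /E expr0z mulr1. Qed.

Lemma f_pow (f : {poly 'F_2}) y : tofrac f ^ y = E f 0 y.
Proof. by rewrite /E expr0z mul1r. Qed.

Lemma tXk (f : {poly 'F_2}) (k : nat) : tofrac ('X^k) = E f k 0.
Proof. by rewrite Enat expr0 mulr1. Qed.

Lemma PsiE (f : {poly 'F_2}) Psi x y : f != 0 -> mul_aut_URf f Psi ->
  Psi (E f x y) = Psi tau ^ x * Psi (tofrac f) ^ y.
Proof.
move=> f0 hPsi; have [hU [hM _]] := hPsi.
rewrite {1}/E hM; last by rewrite f_pow; apply: inU_E.
  rewrite (Psi_pow f0 hPsi) ?(Psi_pow f0 hPsi) //.
    by move=> z; rewrite f_pow; apply: inU_E.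
  by move=> z; rewrite (tau_pow f); apply: inU_E.
by rewrite (tau_pow f); apply: inU_E.
Qed.

Lemma phi1_neq0 f phi : add_aut_Rf f phi -> phi 1 != 0.
Proof.
move=> hphi; have [_ [_ [hinj _]]] := hphi.
apply/negP => /eqP h1.
have R0 : in_Rf f 0 by rewrite -tofrac0; apply: in_Rf_poly.
have R1 : in_Rf f 1 by rewrite -tofrac1; apply: in_Rf_poly.
have := hinj 1 0 R1 R0; rewrite h1 (phi0 hphi) => /(_ erefl) /eqP.
by rewrite oner_eq0.
Qed.

Lemma poly_expand (f : {poly 'F_2}) : f = \sum_(k < size f) (f`_k)%:P * 'X^k.
Proof.
by rewrite -[in LHS](coefK f) poly_def; apply: eq_bigr => i _; rewrite mul_polyC.
Qed.

Lemma Fsum (f : {poly 'F_2}) phi Psi : f != 0 -> add_aut_Rf f phi -> mul_aut_URf f Psi ->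
  (forall u, in_URf f u -> phi u = phi 1 * Psi u) ->
  Psi (tofrac f) = \sum_(k < size f) tofrac ((f`_k)%:P) * Psi tau ^+ k.
Proof.
move=> f0 hphi hPsi hrel.
apply: (mulfI (phi1_neq0 hphi)).
rewrite -hrel; last by rewrite -(E01 f); apply: inU_E.
rewrite {1}(poly_expand f) (phi_sum hphi _ (fun k => (f`_k)%:P * 'X^k)) mulr_sumr.
apply: eq_bigr => k _.
have [->|/F2_neq0 ->] := eqVneq (f`_k) 0.
  rewrite !polyC0 mul0r !tofrac0 (phi0 hphi) mul0r mulr0; reflexivity.
rewrite !polyC1 mul1r rmorph1 mul1r hrel (tXk f); last exact: inU_E.
rewrite (PsiE _ _ f0 hPsi) expr0z mulr1; reflexivity.
Qed.


Definition Gp (f N D : {poly 'F_2}) : {poly 'F_2} :=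
  \sum_(k < size f) (f`_k)%:P * (N ^+ k * D ^+ ((size f).-1 - k)).

Lemma G_frac (f N D : {poly 'F_2}) (F : K) : tofrac D != 0 ->
  F = \sum_(k < size f) tofrac ((f`_k)%:P) * (tofrac N / tofrac D) ^+ k ->
  tofrac (Gp f N D) = F * tofrac D ^+ (size f).-1.
Proof.
move=> D0 ->; rewrite /Gp rmorph_sum mulr_suml; apply: eq_bigr => k _.
rewrite !rmorphM !rmorphXn -mulrA; congr (_ * _).
have km : (k <= (size f).-1)%N by rewrite -ltnS (leq_trans (ltn_ord k)) // leqSpred.
rewrite expr_div_n [in RHS](_ : (size f).-1 = k + ((size f).-1 - k))%N; last by rewrite subnKC.
rewrite exprD mulrA (divfK (expf_neq0 k D0)); reflexivity.
Qed.

Lemma hornerG (f N D : {poly 'F_2}) :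
  (Gp f N D).[0] = \sum_(k < size f) f`_k * (N.[0] ^+ k * D.[0] ^+ ((size f).-1 - k)).
Proof.
rewrite /Gp horner_sum; apply: eq_bigr => k _.
by rewrite hornerCM hornerM !horner_exp.
Qed.

Lemma G0a (f N D : {poly 'F_2}) : (0 < size f)%N -> N.[0] = 0 -> D.[0] = 1 ->
  (Gp f N D).[0] = f`_0.
Proof.
move=> sf N0 D0; rewrite hornerG N0 D0.
case: (size f) sf => [//|n] _.
rewrite big_ord_recl /= expr0 expr1n !mulr1 big1 ?addr0 // => k _.
by rewrite /bump /= expr0n /= mul0r mulr0.
Qed.

Lemma G0b (f N D : {poly 'F_2}) : (0 < size f)%N -> N.[0] = 1 -> D.[0] = 0 ->
  (Gp f N D).[0] = lead_coef f.
Proof.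
move=> sf N0 D0; rewrite hornerG N0 D0 lead_coefE.
case: (size f) sf => [//|n] _.
rewrite big_ord_recr /= subnn expr0 expr1n !mulr1 big1 ?add0r // => k _.
rewrite expr0n /=; case: eqP => [|_]; last by rewrite mulr0 mulr0.
by move/eqP; rewrite subn_eq0 leqNgt ltn_ord.
Qed.

Lemma G0c (f N D : {poly 'F_2}) : N.[0] = 1 -> D.[0] = 1 ->
  (Gp f N D).[0] = f.[1].
Proof.
move=> N0 D0; rewrite hornerG N0 D0 horner_coef; apply: eq_bigr => k _.
by rewrite !expr1n mulr1.
Qed.

Lemma f_ndvd_X (f : {poly 'F_2}) n : irreducible_poly f -> f`_0 = 1 -> ~~ (f %| 'X^n).
Proof.
move=> irr c0; apply/negP => /dvdpP [r hr].
have h : r * f = 'X^n * f ^+ 0 by rewrite expr0 mulr1 hr.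
have [i [j hrij]] := FL irr h.
move: h; rewrite hrij -mulrA -exprSr => /(PE c0 irr.1) [_].
by [].
Qed.

Lemma Gsplit1 (f N D : {poly 'F_2}) : (0 < size f)%N -> f`_0 = 1 ->
  exists R, Gp f N D = D ^+ (size f).-1 + N * R.
Proof.
move=> sf c0; rewrite /Gp.
case: (size f) sf => [//|n] _.
rewrite big_ord_recl /= c0 expr0 mul1r subn0 mul1r.
exists (\sum_(i < n) (f`_(bump 0 i))%:P * (N ^+ i * D ^+ (n - bump 0 i))).
congr (_ + _); rewrite mulr_sumr; apply: eq_bigr => k _.
by rewrite exprS; ring.
Qed.

Lemma Gsplit2 (f N D : {poly 'F_2}) : (0 < size f)%N -> lead_coef f = 1 ->
  exists R, Gp f N D = N ^+ (size f).-1 + D * R.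
Proof.
move=> sf lc; rewrite /Gp lead_coefE in lc *.
case: (size f) sf lc => [//|n] _ /= lc.
rewrite big_ord_recr /= lc subnn expr0 mulr1 mul1r addrC.
exists (\sum_(i < n) (f`_i)%:P * (N ^+ i * D ^+ (n - i).-1)).
congr (_ + _); rewrite mulr_sumr; apply: eq_bigr => k _.
have : (0 < n - k)%N by rewrite subn_gt0.
case: (n - k)%N => [//|e] _ /=.
by rewrite exprS; ring.
Qed.


Lemma Grecip (f : {poly 'F_2}) : Gp f ('X^0 * f ^+ 0) ('X^1 * f ^+ 0) = recip f.
Proof.
rewrite /Gp /recip !expr0 !mulr1 expr1; apply/polyP => i.
rewrite coef_sum coef_poly.
under eq_bigr => k _ do rewrite expr1n mul1r coefCM coefXn.
case: (ltnP i (size f)) => hi.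
  have hk : ((size f).-1 - i < size f)%N.
    by apply: (leq_ltn_trans (leq_subr _ _)); rewrite prednK // (leq_ltn_trans _ hi).
  rewrite (bigD1 (Ordinal hk)) //= subKn; last by rewrite -ltnS prednK // (leq_ltn_trans _ hi).
  rewrite eqxx mulr1 big1 ?addr0 // => k /eqP hne.
  case: eqP => [e|_]; last by rewrite mulr0.
  exfalso; apply: hne; apply: val_inj => /=.
  have := ltn_ord k; rewrite e; lia.
rewrite big1 // => k _; case: eqP => [e|_]; last by rewrite mulr0.
have := ltn_ord k; lia.
Qed.

Lemma recip_contra (f : {poly 'F_2}) j : f`_0 = 1 -> (2 < size f)%N -> ~ self_reciprocal f ->
  recip f = 'X^0 * f ^+ j -> False.
Proof.
move=> c0 s2 nsr; rewrite expr0 mul1r.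
case: j => [|[|j]] h.
- have := congr1 (fun p : {poly 'F_2} => p`_(size f).-1) h.
  rewrite /recip coef_poly prednK ?ltnSn; last by rewrite (ltn_trans _ s2).
  rewrite subnn c0 expr0 coefC; case: (size f) s2 => [|[|n]] //= _.
  by rewrite ltnSn => /eqP; rewrite oner_eq0.
- by apply: nsr; rewrite /self_reciprocal h expr1.
- have := size_poly (size f) (fun i => f`_((size f).-1 - i)).
  rewrite -/(recip f) h -(prednK (n := size (f ^+ j.+2))); last first.
    by rewrite size_poly_gt0 expf_neq0 // -size_poly_gt0 (ltn_trans _ s2).
  rewrite size_exp -{2}(prednK (n := size f)); last by rewrite (ltn_trans _ s2).
  rewrite ltnS; set m := (size f).-1.
  have : (1 < m)%N by rewrite /m -ltnS prednK // (ltn_trans _ s2).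
  nia.
Qed.


Lemma int_unit (x y : int) : x * y = 1 -> x = 1 \/ x = -1.
Proof.
move=> h; have := @intUnitRing.unitzPl x y; rewrite mulrC => /(_ h).
by rewrite qualifE => /orP [/eqP -> | /eqP ->]; [left | right].
Qed.

Lemma nat_prod_pm1 (an bp m : nat) (x : int) : (2 <= m)%N -> (x = 1 \/ x = -1) ->
  x = bp%:Z * (an%:Z * m%:Z) -> False.
Proof.
move=> m2 hx; rewrite -!PoszM => e.
have : (bp * (an * m) = 1)%N by case: hx => hx; move: hx; rewrite e; lia.
move/eqP; rewrite !muln_eq1 => /and3P [_ _ /eqP]; lia.
Qed.

Lemma core (f : {poly 'F_2}) phi Psi : irreducible_poly f -> f != 'X -> ~ self_reciprocal f ->
  add_aut_Rf f phi -> mul_aut_URf f Psi ->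
  (forall u, in_URf f u -> phi u = phi 1 * Psi u) -> forall u, in_URf f u -> Psi u = u.
Proof.
move=> irr fX nsr hphi hPsi hrel.
have f0 := irredp_neq0 irr.
have [c0 lc s2 f1] := f_facts irr fX nsr.
have [hU [hM [hI hS]]] := hPsi.
have Utau : in_URf f tau by rewrite -(E10 f); apply: inU_E.
have Uf : in_URf f (tofrac f) by rewrite -(E01 f); apply: inU_E.
have [a [b hT]] := unitE irr (hU _ Utau).
have [c [d hF]] := unitE irr (hU _ Uf).
have PE' : forall x y, Psi (E f x y) = E f (a * x + c * y) (b * x + d * y).
  by move=> x y; rewrite (PsiE _ _ f0 hPsi) hT hF !EX (EM _ _ _ _ f0).
have [v Uv hv] := hS tau Utau.
have [i [j ev]] := unitE irr Uv.
have [w Uw hw] := hS (tofrac f) Uf.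
have [k [l ew]] := unitE irr Uw.
have [e1 e2] : a * i + c * j = 1 /\ b * i + d * j = 0.
  by apply: (Einj irr c0); rewrite -PE' -ev hv E10.
have [e3 e4] : a * k + c * l = 0 /\ b * k + d * l = 1.
  by apply: (Einj irr c0); rewrite -PE' -ew hw E01.
have det : a * d - b * c = 1 \/ a * d - b * c = -1.
  have h : (a * d - b * c) * (i * l - j * k) =
      (a * i + c * j) * (b * k + d * l) - (b * i + d * j) * (a * k + c * l) by ring.
  rewrite e1 e2 e3 e4 mul1r mul0r subr0 in h.
  exact: int_unit h.
have [ap [an [ha had]]] := intsplit a.
have [bp [bn [hb hbd]]] := intsplit b.
have m2 : (2 <= (size f).-1)%N by rewrite -ltnS prednK // (ltn_trans _ s2).
set m := (size f).-1 in m2.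
pose N := 'X^ap * f ^+ bp; pose D := 'X^an * f ^+ bn.
have D0 : tofrac D != 0 by apply: tXF_neq0.
have hG : tofrac (Gp f N D) = E f (c + an%:Z * m%:Z) (d + bn%:Z * m%:Z).
  rewrite (G_frac (F := Psi (tofrac f)) D0).
    by rewrite hF /D -Enat exprnP EX (EM _ _ _ _ f0).
  rewrite -(Erep f0 ha hb) -hT.
  exact: (Fsum f0 hphi hPsi hrel).
have [i' [j' [hGp [hi' hj']]]] := polyE irr c0 hG.
have hN0 : N.[0] = 0 ^+ ap.
  by rewrite /N hornerM hornerXn horner_exp horner_coef0 c0 expr1n mulr1.
have hD0 : D.[0] = 0 ^+ an.
  by rewrite /D hornerM hornerXn horner_exp horner_coef0 c0 expr1n mulr1.
have sf0 : (0 < size f)%N by rewrite (ltn_trans _ s2).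
have G0 : (Gp f N D).[0] != 0.
  rewrite expr0n in hN0; rewrite expr0n in hD0.
  have [ap0|ap0] := eqVneq ap 0%N; have [an0|an0] := eqVneq an 0%N.
  - by rewrite G0c ?hN0 ?hD0 ?ap0 ?an0.
  - by rewrite G0b ?hN0 ?hD0 ?ap0 ?(negPf an0) ?lc.
  - by rewrite G0a ?hN0 ?hD0 ?(negPf ap0) ?an0 ?c0.
  - by exfalso; case: had => /eqP; rewrite ?(negPf ap0) ?(negPf an0).
have i'0 : i' = 0%N.
  case: i' hGp hi' => [//|i'] hGp _; exfalso.
  by move: G0; rewrite hGp hornerM hornerXn exprS !mul0r eqxx.
have fnG : (bp != 0)%N || (bn != 0)%N -> ~~ (f %| Gp f N D).
  move=> hb0; case: hbd => h0.
  - have bn0 : (0 < bn)%N by move: hb0; rewrite h0 /= lt0n.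
    have [R ->] := Gsplit2 N D sf0 lc.
    have fD : f %| D by rewrite /D dvdp_mull // dvdp_exp // dvdpp.
    rewrite (dvdp_addl _ (dvdp_mulr _ fD)) /N h0 expr0 mulr1 -exprM.
    exact: f_ndvd_X.
  - have bp0 : (0 < bp)%N by move: hb0; rewrite h0 orbF lt0n.
    have [R ->] := Gsplit1 N D sf0 c0.
    have fN : f %| N by rewrite /N dvdp_mull // dvdp_exp // dvdpp.
    rewrite (dvdp_addl _ (dvdp_mulr _ fN)) /D h0 expr0 mulr1 -exprM.
    exact: f_ndvd_X.
have j'0 : (bp != 0)%N || (bn != 0)%N -> j' = 0%N.
  move=> hb0; case: j' hGp hj' => [//|j'] hGp _; exfalso.
  move: (fnG hb0); rewrite hGp exprS.
  by rewrite dvdp_mull // dvdp_mulr // dvdpp.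
have cE : c = - (an%:Z * m%:Z) by apply/eqP; rewrite -addr_eq0 hi' i'0.
have [bnz|b0] := boolP ((bp != 0)%N || (bn != 0)%N).
- exfalso; have j0 := j'0 bnz.
  have dE : d = - (bn%:Z * m%:Z) by apply/eqP; rewrite -addr_eq0 hj' j0.
  case: hbd => h0.
  + apply: (@nat_prod_pm1 ap bn _ (- (a * d - b * c)) m2).
      by case: det => ->; [right | left; rewrite opprK].
    by rewrite ha hb dE cE h0; ring.
  + apply: (@nat_prod_pm1 an bp _ (a * d - b * c) m2 det).
    by rewrite ha hb dE cE h0; ring.
- move: b0; rewrite negb_or !negbK => /andP [/eqP bp0 /eqP bn0].
  have b00 : b = 0 by rewrite hb bp0 bn0.
  have ad1 : a = 1 \/ a = -1.
    rewrite b00 mul0r subr0 in det.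
    case: det => h; first exact: int_unit h.
    by apply: (@int_unit a (- d)); rewrite mulrN h opprK.
  case: ad1 => a1.
  + have hTt : Psi tau = tau by rewrite hT a1 b00 E10.
    have hFf : Psi (tofrac f) = tofrac f.
      rewrite (Fsum f0 hphi hPsi hrel) hTt [in RHS](poly_expand f) rmorph_sum.
      apply: eq_bigr => n _; rewrite rmorphM rmorphXn; reflexivity.
    move=> u Uu; have [x [y ->]] := unitE irr Uu.
    rewrite (PsiE _ _ f0 hPsi) hTt hFf; reflexivity.
  + exfalso.
    have [ap0 an1] : (ap = 0 /\ an = 1)%N by move: ha; rewrite a1; case: had => ->; lia.
    apply: (@recip_contra f j' c0 s2 nsr).
    by rewrite -Grecip; move: hGp; rewrite i'0 /N /D ap0 an1 bp0 bn0 => <-.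
Qed.


Lemma inURf_inv (f : {poly 'F_2}) u : in_URf f u -> in_URf f u^-1.
Proof.
move=> [R1 [u0 R2]]; split; first exact: R2.
by split; [rewrite invr_neq0 | rewrite invrK].
Qed.

Unset Implicit Arguments.

Theorem mainTheorem15 (f : {poly 'F_2}) (phi Phi : {fraction {poly 'F_2}} -> {fraction {poly 'F_2}}) :
  irreducible_poly f -> f != 'X -> ~ self_reciprocal f ->
  add_aut_Rf f phi -> mul_aut_URf f Phi ->
  ((forall u, in_URf f u -> Phi u * phi 1 = phi u) ->
     forall u, in_URf f u -> Phi u = u) /\
  ((forall u, in_URf f u -> Phi u * phi 1 = phi u^-1) ->
     forall u, in_URf f u -> Phi u = u^-1).
Proof.
move=> irr fX nsr hphi hPhi; split.
  move=> hrel; apply: (core irr fX nsr hphi hPhi) => u Uu.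
  by rewrite -hrel // mulrC.
move=> hrel.
have [hU [hM [hI hS]]] := hPhi.
pose Psi := fun u : {fraction {poly 'F_2}} => Phi u^-1.
have hPsi : mul_aut_URf f Psi.
  split; last split; last split.
  - by move=> x Ux; apply: hU; apply: inURf_inv.
  - move=> x y Ux Uy; rewrite /Psi invfM; apply: hM; exact: inURf_inv.
  - move=> x y Ux Uy /hI; move=> /(_ (inURf_inv Ux) (inURf_inv Uy)); exact: invr_inj.
  - move=> y Uy; have [x Ux hx] := hS y Uy.
    by exists x^-1; [apply: inURf_inv | rewrite /Psi invrK].
have hc := core irr fX nsr hphi hPsi.
have H : forall u, in_URf f u -> Psi u = u.
  apply: hc => u Uu; rewrite mulrC /Psi hrel ?invrK //; exact: inURf_inv.
move=> u Uu; have := H _ (inURf_inv Uu); rewrite /Psi invrK; exact.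
Qed.
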